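(* Fix constants $C,\delta>0$. Let $G=(V,E)$ be a proper graph on $n$ vertices (with $C_1=C_2=1$ and $K=2$) and let $N=(G,c)$ be the electrical network with unit conductance $c_{ij}=1$ on every edge. Let $x,y\in V$ be distinct boundary vertices with potentials $V_x=1$ and $V_y=0$. Then the potential distribution satisfies \[ V_i=\frac{d(x)}{d(x)+d(y)}+O\big((\ln n)^{-1}\big)\qquad\text{for each } i\in V\setminus\{x,y\}, \] where $d(v)$ denotes the degree of $v$ in $G$.
   Context: An electrical network $N=(G,c)$ on a simple graph $G=(V,E)$ assigns a conductance $c_{ij}=c_{ji}>0$ to each edge $(i,j)\in E$. Given a boundary set $\Gamma\subset V$ with prescribed values on $\Gamma$, the potential distribution is the function $V:V\to\mathbb{R}$ taking the prescribed values on $\Gamma$ and satisfying $\sum_{j:(i,j)\in E}c_{ij}(V_i-V_j)=0$ for every $i\in V\setminus\Gamma$. Let $G=(V,E)$ be a simple graph on $n$ vertices and let $0<C_1\le C_2$, $K\ge 1$, $C>0$, $\delta>0$ be constants. $G$ is called proper if: (P1) $G$ is connected. (P2) Calling a cycle short if its length is at most $\frac{\ln n}{10\ln\ln n}$, any two distinct short cycles are at distance at least $\frac{\ln n}{\ln\ln n}$. (P3) $G$ contains at least one cycle of length 3, one of length 5, and one of length 7. (P4) For every conductance assignment $c$ on $E$ with $C_1\le c_{ij}\le C_2$ for all $(i,j)\in E$, every $L\subset V$ with $|L|\le K$, and every nonempty $S\subset V\setminus L$ with $|S|\le n/2$, writing $G'=G[V\setminus L]=(V',E')$, $\bar S=V\setminus(L\cup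 S)$, $E_{G'}(S,\bar S)$ for the set of edges of $G'$ with one end in $S$ and the other in $\bar S$, and $c'_i=\sum_{j:(i,j)\in E'}c_{ij}$, one has $\dfrac{\sum_{(i,j)\in E_{G'}(S,\bar S)}c_{ij}}{\sum_{i\in S}c'_i}\ge \dfrac{C_1}{6C_2}$. (P5) Every vertex $i\in V$ has degree $d(i)$ satisfying $\delta C\ln n< d(i)<4C\ln n$. Asymptotic notation refers to $n\to\infty$; the implied constant depends only on $C,\delta$. *)

(* Defs.v *)
From Stdlib Require Import Reals.
From mathcomp Require Import all_boot.

Set Implicit Arguments.
Unset Strict Implicit.
Unset Printing Implicit Defensive.
Local Open Scope R_scope.

Definition simple_graph (n : nat) (adj : rel 'I_n) : Prop :=
  (forall i j, adj i j = adj j i) /\ (forall i, adj i i = false).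

Definition deg (n : nat) (adj : rel 'I_n) (i : 'I_n) : nat :=
  #|[set j | adj i j]|.

Notation "\rsum_ ( i | P ) F" := (\big[Rplus/R0]_(i | P) F)
  (at level 41, F at level 41, i at level 50).

Definition P1 (n : nat) (adj : rel 'I_n) : Prop :=
  forall i j : 'I_n, connect adj i j.

Definition is_cycle (n : nat) (adj : rel 'I_n) (s : seq 'I_n) : Prop :=
  [/\ uniq s, (3 <= size s)%N & cycle adj s].

(* Edge set of a cycle (as ordered pairs, both orientations). Two cycles are
   the same cycle iff they have the same edge set. *)
Definition cycle_edges (n : nat) (s : seq 'I_n) : {set 'I_n * 'I_n} :=
  [set p | (p.1 \in s) && ((next s p.1 == p.2) || (prev s p.1 == p.2))].

Definition dist_ge (n : nat) (adj : rel 'I_n) (A B : seq 'I_n) (D : R) : Prop :=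
  forall (u v : 'I_n) (p : seq 'I_n),
    u \in A -> v \in B -> path adj u p -> last u p = v ->
    D <= INR (size p).

Definition short_cycle (n : nat) (adj : rel 'I_n) (s : seq 'I_n) : Prop :=
  is_cycle adj s /\
  INR (size s) <= ln (INR n) / (10 * ln (ln (INR n))).

Definition P2 (n : nat) (adj : rel 'I_n) : Prop :=
  forall s1 s2 : seq 'I_n,
    short_cycle adj s1 -> short_cycle adj s2 ->
    cycle_edges s1 <> cycle_edges s2 ->
    dist_ge adj s1 s2 (ln (INR n) / ln (ln (INR n))).

Definition P3 (n : nat) (adj : rel 'I_n) : Prop :=
  (exists s, is_cycle adj s /\ (size s = 3)%N) /\
  (exists s, is_cycle adj s /\ (size s = 5)%N) /\
  (exists s, is_cycle adj s /\ (size s = 7)%N).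

(* (P4), with the ratio inequality written in cross-multiplied form. *)
Definition P4 (n : nat) (adj : rel 'I_n) (C1 C2 : R) (K : nat) : Prop :=
  forall (c : 'I_n -> 'I_n -> R),
    (forall i j, c i j = c j i) ->
    (forall i j, adj i j -> (C1 <= c i j <= C2)) ->
  forall (L S : {set 'I_n}),
    (#|L| <= K)%N -> S != set0 -> [disjoint S & L] -> (2 * #|S| <= n)%N ->
    (C1 / (6 * C2) *
       (\rsum_(i | i \in S) \rsum_(j | (j \notin L) && adj i j) c i j)
     <= (\rsum_(i | i \in S)
          \rsum_(j | (j \notin L) && (j \notin S) && adj i j) c i j)).

Definition P5 (n : nat) (adj : rel 'I_n) (C delta : R) : Prop :=
  forall i : 'I_n,
    delta * C * ln (INR n) < INR (deg adj i) < 4 * C * ln (INR n).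

Definition proper_graph (n : nat) (adj : rel 'I_n)
    (C1 C2 : R) (K : nat) (C delta : R) : Prop :=
  [/\ P1 adj, P2 adj, P3 adj, P4 adj C1 C2 K & P5 adj C delta].

Definition unit_potential (n : nat) (adj : rel 'I_n) (x y : 'I_n)
    (V : 'I_n -> R) : Prop :=
  [/\ V x = 1, V y = 0 &
      forall i, i != x -> i != y ->
        \rsum_(j | adj i j) (1 * (V i - V j)) = 0].

(* Main.v *)
From HB Require Import structures.
Require Import Defs.
From Stdlib Require Import Reals Lra Lia Psatz.
From mathcomp Require Import all_boot zify.
Set Implicit Arguments.
Unset Strict Implicit.
Local Open Scope R_scope.


HB.instance Definition _ := Monoid.isComLaw.Build R R0 Rplus (fun a b c => esym (Rplus_assoc a b c)) Rplus_comm Rplus_0_l.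
HB.instance Definition _ := Monoid.isComLaw.Build R R1 Rmult (fun a b c => esym (Rmult_assoc a b c)) Rmult_comm Rmult_1_l.
HB.instance Definition _ := Monoid.isMulLaw.Build R R0 Rmult Rmult_0_l Rmult_0_r.
HB.instance Definition _ := Monoid.isAddLaw.Build R Rmult Rplus Rmult_plus_distr_r Rmult_plus_distr_l.

Lemma rsum_le (I : finType) (P : pred I) (F G : I -> R) :
  (forall i, P i -> F i <= G i) -> \rsum_(i | P i) F i <= \rsum_(i | P i) G i.
Proof.
move=> H; apply: (big_ind2 (fun a b => a <= b)) => //; first lra.
by move=> *; lra.
Qed.

Lemma rsum_ge0 (I : finType) (P : pred I) (F : I -> R) :
  (forall i, P i -> 0 <= F i) -> 0 <= \rsum_(i | P i) F i.
Proof.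
move=> H; apply: (big_ind (fun a => 0 <= a)) => //; first lra.
by move=> *; lra.
Qed.

Lemma rsum_split (I : finType) (P : pred I) (F G : I -> R) :
  \rsum_(i | P i) (F i + G i) = \rsum_(i | P i) F i + \rsum_(i | P i) G i.
Proof. exact: big_split. Qed.

Lemma rsum_scal (I : finType) (P : pred I) (c : R) (F : I -> R) :
  \rsum_(i | P i) (c * F i) = c * \rsum_(i | P i) F i.
Proof. by rewrite big_distrr. Qed.

Lemma rsum_opp (I : finType) (P : pred I) (F : I -> R) :
  \rsum_(i | P i) (- F i) = - \rsum_(i | P i) F i.
Proof.
by rewrite (big_morph Ropp Ropp_plus_distr Ropp_0).
Qed.

Lemma rsum_sub (I : finType) (P : pred I) (F G : I -> R) :
  \rsum_(i | P i) (F i - G i) = \rsum_(i | P i) F i - \rsum_(i | P i) G i.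
Proof. by rewrite /Rminus rsum_split rsum_opp. Qed.

Lemma rsum_eq (I : finType) (P : pred I) (F G : I -> R) :
  (forall i, P i -> F i = G i) -> \rsum_(i | P i) F i = \rsum_(i | P i) G i.
Proof. exact: eq_bigr. Qed.

Lemma rsum_card (I : finType) (P : pred I) :
  \rsum_(i | P i) 1 = INR #|[set i | P i]|.
Proof.
rewrite cardsE -sum1_card.
have HM : {morph INR : a b / (a + b)%N >-> a + b} by move=> a b; exact: plus_INR.
by rewrite (big_morph INR HM (erefl (INR 0))).
Qed.


Lemma split_adj n (adj : rel 'I_n) (x y : 'I_n) (F : 'I_n -> R) i : x != y ->
  \rsum_(j | adj i j) F j = \rsum_(j | (j \notin [set x; y]) && adj i j) F j
     + ((if adj i x then F x else 0) + (if adj i y then F y else 0)).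
Proof.
move=> nxy.
rewrite (bigID (fun j => j \in [set x; y])) /= Rplus_comm.
congr (_ + _).
  by apply: eq_bigl => j; rewrite andbC.
have nyx : y != x by rewrite eq_sym.
rewrite big_mkcond (bigD1 x) //= (bigD1 y) //=.
rewrite (@big1 R R0 Rplus); last first.
  by move=> j /andP [jx jy]; rewrite !inE (negbTE jx) (negbTE jy) andbF.
rewrite !inE !eqxx /= orbT Rplus_0_r.
by case: (adj i x); case: (adj i y).
Qed.
Lemma pair_swap n (adj : rel 'I_n) (L : {set 'I_n}) (F : 'I_n -> 'I_n -> R) :
  (forall i j, adj i j = adj j i) ->
  \rsum_(i | i \notin L) \rsum_(j | (j \notin L) && adj i j) F i j =
  \rsum_(i | i \notin L) \rsum_(j | (j \notin L) && adj i j) F j i.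
Proof.
move=> sym.
rewrite (exchange_big_dep (fun j => j \notin L)) /=; last by move=> i j _ /andP[].
apply: eq_bigr => j Hj; apply: eq_bigl => i.
by rewrite Hj /= sym.
Qed.

Lemma full_swap n (adj : rel 'I_n) (F : 'I_n -> 'I_n -> R) :
  (forall i j, adj i j = adj j i) ->
  \rsum_(i | true) \rsum_(j | adj i j) F i j =
  \rsum_(i | true) \rsum_(j | adj i j) F j i.
Proof.
move=> sym.
rewrite (exchange_big_dep (fun j => true)) //=.
apply: eq_bigr => j Hj; apply: eq_bigl => i.
by rewrite sym.
Qed.


Lemma rsum_nonneg_eq0 (I : finType) (P : pred I) (F : I -> R) :
  (forall i, P i -> 0 <= F i) -> \rsum_(i | P i) F i = 0 -> forall i, P i -> F i = 0.
Proof.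
move=> H S i Pi; rewrite (bigD1 i) //= in S.
have : 0 <= \rsum_(j | P j && (j != i)) F j by apply: rsum_ge0 => j /andP[/H].
have := H i Pi; lra.
Qed.

Lemma seq_argmax (T : eqType) (f : T -> R) (s : seq T) : s <> [::] ->
  exists k, k \in s /\ forall j, j \in s -> f j <= f k.
Proof.
elim: s => [//|a s IH] _.
case: s IH => [|b s] IH.
  by exists a; split; [rewrite inE eqxx | move=> j; rewrite inE => /eqP ->; lra].
have [k [ks Hk]] := IH ltac:(done).
case: (Rle_dec (f a) (f k)) => H.
  exists k; split; first by rewrite inE ks orbT.
  by move=> j; rewrite inE => /orP [/eqP ->|/Hk].
exists a; split; first by rewrite inE eqxx.
move=> j; rewrite inE => /orP [/eqP ->|/Hk]; lra.
Qed.

Lemma argmax (T : finType) (A : {set T}) (f : T -> R) : A != set0 ->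
  exists k, k \in A /\ forall j, j \in A -> f j <= f k.
Proof.
case/set0Pn => a aA.
have ne : enum A <> [::] by move=> E; have := mem_enum A a; rewrite E aA.
have [k [kA Hk]] := @seq_argmax _ f _ ne.
exists k; split; first by rewrite mem_enum in kA.
by move=> j jA; apply: Hk; rewrite mem_enum.
Qed.

Lemma argmin (T : finType) (A : {set T}) (f : T -> R) : A != set0 ->
  exists k, k \in A /\ forall j, j \in A -> f k <= f j.
Proof.
move=> ne; have [k [kA Hk]] := @argmax _ _ (fun j => - f j) ne.
by exists k; split => // j /Hk; lra.
Qed.

Lemma maxp n (adj : rel 'I_n) (x y : 'I_n) (W : 'I_n -> R) :
  P1 adj ->
  (forall i, i != x -> i != y -> \rsum_(j | adj i j) (W i - W j) = 0) ->
  forall i, W i <= Rmax (W x) (W y).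
Proof.
move=> Hc Hh i.
have ne : [set: 'I_n] != set0 by apply/set0Pn; exists i.
have [k [_ Hk]] := @argmax _ _ W ne.
case: (Rle_dec (W k) (Rmax (W x) (W y))) => Hle.
  by have := Hk i (in_setT _); lra.
have Hx := Rmax_l (W x) (W y); have Hy := Rmax_r (W x) (W y).
have step : forall z z', W z = W k -> adj z z' -> W z' = W k.
  move=> z z' Ez Hzz'.
  have zx : z != x by apply/eqP => E; rewrite E in Ez; lra.
  have zy : z != y by apply/eqP => E; rewrite E in Ez; lra.
  have H0 := @rsum_nonneg_eq0 _ (fun j => adj z j) (fun j => W z - W j).
  have := H0 (fun j _ => ltac:(have := Hk j (in_setT _); lra)) (Hh z zx zy) z' Hzz'.
  lra.
have [p Hp Hl] := connectP (Hc k x).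
suff : W (last k p) = W k by rewrite -Hl; lra.
have gen : forall z, W z = W k -> path adj z p -> W (last z p) = W k.
  elim: p {Hp Hl} => [z Ez _ //|a p IH] z Ez /= /andP [Hza Hp].
  apply: IH Hp; exact: step Ez Hza.
exact: gen.
Qed.


Definition rltb (a b : R) : bool := if Rlt_dec a b then true else false.
Lemma rltbP a b : reflect (a < b) (rltb a b).
Proof. by rewrite /rltb; case: Rlt_dec => H; constructor. Qed.

Definition dsum n (adj : rel 'I_n) (L : {set 'I_n}) (F : 'I_n -> 'I_n -> R) :=
  \rsum_(i | i \notin L) \rsum_(j | (j \notin L) && adj i j) F i j.

Lemma dsum_le n (adj : rel 'I_n) (L : {set 'I_n}) (F G : 'I_n -> 'I_n -> R) :
  (forall i j, i \notin L -> j \notin L -> adj i j -> F i j <= G i j) ->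
  dsum adj L F <= dsum adj L G.
Proof.
move=> H; apply: rsum_le => i Hi; apply: rsum_le => j /andP [Hj Ha]; exact: H.
Qed.

Lemma dsum_ge0 n (adj : rel 'I_n) (L : {set 'I_n}) (F : 'I_n -> 'I_n -> R) :
  (forall i j, i \notin L -> j \notin L -> adj i j -> 0 <= F i j) ->
  0 <= dsum adj L F.
Proof.
move=> H; apply: rsum_ge0 => i Hi; apply: rsum_ge0 => j /andP [Hj Ha]; exact: H.
Qed.

Lemma dsum_split n (adj : rel 'I_n) (L : {set 'I_n}) (F G : 'I_n -> 'I_n -> R) :
  dsum adj L (fun i j => F i j + G i j) = dsum adj L F + dsum adj L G.
Proof.
rewrite /dsum -rsum_split; apply: eq_bigr => i _; exact: rsum_split.
Qed.

Lemma dsum_scal n (adj : rel 'I_n) (L : {set 'I_n}) c (F : 'I_n -> 'I_n -> R) :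
  dsum adj L (fun i j => c * F i j) = c * dsum adj L F.
Proof.
rewrite /dsum -rsum_scal; apply: eq_bigr => i _; exact: rsum_scal.
Qed.

Lemma dsum_ext n (adj : rel 'I_n) (L : {set 'I_n}) (F G : 'I_n -> 'I_n -> R) :
  (forall i j, i \notin L -> j \notin L -> adj i j -> F i j = G i j) ->
  dsum adj L F = dsum adj L G.
Proof.
move=> H; apply: eq_bigr => i Hi; apply: eq_bigr => j /andP [Hj Ha]; exact: H.
Qed.

Lemma dsum_swap n (adj : rel 'I_n) (L : {set 'I_n}) (F : 'I_n -> 'I_n -> R) :
  (forall i j, adj i j = adj j i) ->
  dsum adj L F = dsum adj L (fun i j => F j i).
Proof. move=> sym; exact: pair_swap. Qed.

Lemma rsum_ifc (I : finType) (P : pred I) (b : bool) (F : I -> R) :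
  \rsum_(i | P i) (if b then F i else 0) = if b then \rsum_(i | P i) F i else 0.
Proof. by case: b => //; rewrite big1. Qed.

Lemma rsum_restr n (L T : {set 'I_n}) (G : 'I_n -> R) :
  (forall i, i \in T -> i \notin L) ->
  \rsum_(i | i \notin L) (if i \in T then G i else 0) = \rsum_(i | i \in T) G i.
Proof.
move=> H; rewrite -(big_mkcondr _ _ (fun i => i \notin L) (fun i => i \in T)) /=.
apply: eq_bigl => i; case iT: (i \in T); last by rewrite andbF.
by rewrite (H i iT).
Qed.

Lemma rsum_constc (I : finType) (P : pred I) c :
  \rsum_(i | P i) c = c * \rsum_(i | P i) 1.
Proof. rewrite -rsum_scal; apply: eq_bigr => i _; ring. Qed.

Lemma coarea n (adj : rel 'I_n) (L : {set 'I_n}) :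
  (forall S : {set 'I_n}, S != set0 -> [disjoint S & L] -> (2 * #|S| <= n)%N ->
     1/6 * (\rsum_(i | i \in S) \rsum_(j | (j \notin L) && adj i j) 1)
     <= \rsum_(i | i \in S) \rsum_(j | (j \notin L) && (j \notin S) && adj i j) 1) ->
  forall k (h : 'I_n -> R), (#|[set j | rltb 0 (h j)]| <= k)%N ->
  (forall j, 0 <= h j) -> (forall j, 0 < h j -> j \notin L) ->
  (2 * #|[set j | rltb 0 (h j)]| <= n)%N ->
  1/6 * dsum adj L (fun i j => h i) <= dsum adj L (fun i j => Rmax (h i - h j) 0).
Proof.
move=> HP4; elim=> [|k IH] h Hk h0 hL h2.
  have z : forall j, h j = 0.
    move=> j; have := h0 j; case: (Rle_lt_or_eq_dec 0 (h j) (h0 j)) => // H _.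
    have : j \in [set j | rltb 0 (h j)] by rewrite inE; apply/rltbP.
    by move: Hk; rewrite leqn0 => /eqP/cards0_eq ->; rewrite inE.
  have -> : dsum adj L (fun i j => h i) = 0.
    rewrite /dsum big1 // => i _; rewrite big1 // => j _; exact: z.
  have := dsum_ge0 (adj := adj) (L := L) (F := fun i j => Rmax (h i - h j) 0)
     (fun i j _ _ _ => Rmax_r _ _); lra.
set T := [set j | rltb 0 (h j)].
case: (boolP (T == set0)) => [/eqP T0 | Tne].
  apply: IH; rewrite // -/T T0 cards0 //.
have [k0 [k0T Hk0]] := @argmin _ T h Tne.
have mupos : 0 < (h k0) by move: k0T; rewrite inE => /rltbP.
have inT : forall j, (j \in T) = rltb 0 (h j) by move=> j; rewrite inE.
set h' := fun j => if j \in T then h j - (h k0) else 0.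
have h'0 : forall j, 0 <= h' j.
  move=> j; rewrite /h'; case: ifP => [/Hk0|_]; [move=> ?|]; lra.
have hdec : forall j, h j = h' j + (if j \in T then (h k0) else 0).
  move=> j; rewrite /h'; case: ifP => jT; first ring.
  have := h0 j; case: (Rle_lt_or_eq_dec 0 (h j) (h0 j)) => // H _.
    by move: jT; rewrite inT => /rltbP; case.
  by rewrite -H; ring.
have sub : [set j | rltb 0 (h' j)] \subset T :\ k0.
  apply/subsetP => j; rewrite !inE => /rltbP; rewrite /h'.
  case: ifP => jT; last lra.
  move=> H; rewrite -inT jT andbT; apply/eqP => E; rewrite E in H; lra.
have cardlt : (#|[set j | rltb 0 (h' j)]| <= k)%N.
  have := subset_leq_card sub; have := cardsD1 k0 T; rewrite k0T /= => E.
  move: Hk; rewrite -/T E add1n ltnS => H1 H2; exact: leq_trans H2 H1.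
have TL : forall j, j \in T -> j \notin L by move=> j; rewrite inT => /rltbP /hL.
have IH' := IH h' cardlt h'0.
have IH'' : 1/6 * dsum adj L (fun i j => h' i) <= dsum adj L (fun i j => Rmax (h' i - h' j) 0).
  apply: IH'.
  - move=> j Hj; apply: TL; move: Hj; rewrite /h'; case: ifP => //; lra.
  - have := subset_leq_card sub; move: h2; rewrite -/T.
    have := subset_leq_card (subsetDl T [set k0]); lia.
have E1 : dsum adj L (fun i j => h i) = dsum adj L (fun i j => h' i)
     + (h k0) * \rsum_(i | i \in T) \rsum_(j | (j \notin L) && adj i j) 1.
  rewrite (dsum_ext (G := fun i j => h' i + (if i \in T then (h k0) else 0))); last first.
    by move=> i j _ _ _; rewrite -hdec.
  rewrite dsum_split; congr (_ + _).
  rewrite /dsum -rsum_scal -(rsum_restr _ TL).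
  apply: eq_bigr => i _; rewrite rsum_ifc; case: (i \in T) => //.
    exact: rsum_constc.
have E2 : dsum adj L (fun i j => Rmax (h i - h j) 0) =
     dsum adj L (fun i j => Rmax (h' i - h' j) 0)
     + (h k0) * \rsum_(i | i \in T) \rsum_(j | (j \notin L) && (j \notin T) && adj i j) 1.
  rewrite (dsum_ext (G := fun i j => Rmax (h' i - h' j) 0 +
              (if i \in T then (if j \in T then 0 else (h k0)) else 0))); last first.
    move=> i j _ _ _; rewrite (hdec i) (hdec j).
    have Hi := h'0 i; have Hj := h'0 j.
    have z : forall j, j \notin T -> h' j = 0 by move=> j' /negbTE jT; rewrite /h' jT.
    case iT: (i \in T); case jT: (j \in T).
    - by rewrite !Rplus_0_r; congr Rmax; ring.
    - rewrite (z j) ?jT // !Rmax_left; lra.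
    - rewrite (z i) ?iT // !Rmax_right; lra.
    - by rewrite !Rplus_0_r.
  rewrite dsum_split; congr (_ + _).
  rewrite /dsum -rsum_scal -(rsum_restr _ TL).
  apply: eq_bigr => i _; rewrite rsum_ifc; case: (i \in T) => //.
  transitivity (\rsum_(j | (j \notin L) && adj i j) (if j \notin T then h k0 else R0)).
    by apply: eq_bigr => j _; case: (j \in T).
  rewrite -big_mkcondr -rsum_constc; apply: eq_bigl => j.
  by case: (j \in L); case: (j \in T); case: (adj i j).
have dTL : [disjoint T & L].
  by rewrite disjoints_subset; apply/subsetP => j jT; rewrite inE; exact: TL.
have P4T := HP4 T Tne dTL h2.
rewrite E1 E2.
set A := \rsum_(i | i \in T) _ in P4T *.
set B := \rsum_(i | i \in T) _ in P4T *.
have : h k0 * (1/6 * A) <= h k0 * B by apply: Rmult_le_compat_l; lra.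
lra.
Qed.


Definition HP4 n (adj : rel 'I_n) (L : {set 'I_n}) :=
  forall S : {set 'I_n}, S != set0 -> [disjoint S & L] -> (2 * #|S| <= n)%N ->
     1/6 * (\rsum_(i | i \in S) \rsum_(j | (j \notin L) && adj i j) 1)
     <= \rsum_(i | i \in S) \rsum_(j | (j \notin L) && (j \notin S) && adj i j) 1.

Lemma amgm_pos (a b : R) : 0 <= a -> 0 <= b ->
  Rmax (a ^ 2 - b ^ 2) 0 <= 12 * (a - b) ^ 2 + 1/24 * (a ^ 2 + b ^ 2).
Proof.
move=> Ha Hb; apply: Rmax_lub.
  have := pow2_ge_0 (a - b - (a+b)/24); have := pow2_ge_0 (a-b); nra.
have := pow2_ge_0 (a-b); have := pow2_ge_0 a; have := pow2_ge_0 b; lra.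
Qed.

Lemma sq_bound n (adj : rel 'I_n) (L : {set 'I_n}) (a : 'I_n -> R) :
  HP4 adj L -> (forall i j, adj i j = adj j i) ->
  (forall j, 0 <= a j) -> (forall j, 0 < a j ^ 2 -> j \notin L) ->
  (2 * #|[set j | rltb 0 (a j ^ 2)]| <= n)%N ->
  dsum adj L (fun i j => a i ^ 2) <= 144 * dsum adj L (fun i j => (a i - a j) ^ 2).
Proof.
move=> hp sym a0 aL a2.
have := @coarea n adj L hp _ (fun j => a j ^ 2) (leqnn _) (fun j => pow2_ge_0 (a j)) aL a2.
move=> H.
have H2 : dsum adj L (fun i j => Rmax (a i ^ 2 - a j ^ 2) 0) <=
   dsum adj L (fun i j => 12 * (a i - a j) ^ 2 + (1/24 * a i ^ 2 + 1/24 * a j ^ 2)).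
  apply: dsum_le => i j _ _ _; have := amgm_pos (a0 i) (a0 j); lra.
rewrite !dsum_split !dsum_scal in H2.
rewrite -(dsum_swap _ (fun i j => a i ^ 2) sym) in H2.
lra.
Qed.

Lemma maxsplit (u u' : R) :
  Rmax u 0 ^ 2 + Rmax (- u) 0 ^ 2 = u ^ 2 /\
  (Rmax u 0 - Rmax u' 0) ^ 2 + (Rmax (- u) 0 - Rmax (- u') 0) ^ 2 <= (u - u') ^ 2.
Proof.
rewrite /Rmax; split; repeat case: Rle_dec => ? ; nra.
Qed.

Lemma poincare n (adj : rel 'I_n) (L : {set 'I_n}) (V : 'I_n -> R) m :
  HP4 adj L -> (forall i j, adj i j = adj j i) ->
  (2 * #|[set j | (j \notin L) && rltb m (V j)]| <= n)%N ->
  (2 * #|[set j | (j \notin L) && rltb (V j) m]| <= n)%N ->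
  dsum adj L (fun i j => (V i - m) ^ 2) <= 144 * dsum adj L (fun i j => (V i - V j) ^ 2).
Proof.
move=> hp sym c1 c2.
pose a j := if j \in L then 0 else Rmax (V j - m) 0.
pose b j := if j \in L then 0 else Rmax (- (V j - m)) 0.
have a0 : forall j, 0 <= a j by move=> j; rewrite /a; case: ifP => _; [lra | apply: Rmax_r].
have b0 : forall j, 0 <= b j by move=> j; rewrite /b; case: ifP => _; [lra | apply: Rmax_r].
have Ha := @sq_bound n adj L a hp sym a0.
have Hb := @sq_bound n adj L b hp sym b0.
have Ha' : dsum adj L (fun i j => a i ^ 2) <= 144 * dsum adj L (fun i j => (a i - a j) ^ 2).
  apply: Ha.
  - move=> j; rewrite /a; case: ifP => // _; lra.
  - apply: leq_trans c1; rewrite leq_mul2l; apply/orP; right; apply: subset_leq_card.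
    apply/subsetP => j; rewrite !inE /a; case: ifP => _ /rltbP; first lra.
    move=> H; apply/rltbP; move: H; rewrite /Rmax; case: Rle_dec; lra.
have Hb' : dsum adj L (fun i j => b i ^ 2) <= 144 * dsum adj L (fun i j => (b i - b j) ^ 2).
  apply: Hb.
  - move=> j; rewrite /b; case: ifP => // _; lra.
  - apply: leq_trans c2; rewrite leq_mul2l; apply/orP; right; apply: subset_leq_card.
    apply/subsetP => j; rewrite !inE /b; case: ifP => _ /rltbP; first lra.
    move=> H; apply/rltbP; move: H; rewrite /Rmax; case: Rle_dec; lra.
have E1 : dsum adj L (fun i j => (V i - m) ^ 2) =
          dsum adj L (fun i j => a i ^ 2 + b i ^ 2).
  apply: dsum_ext => i j iL _ _; rewrite /a /b (negbTE iL).
  by case: (maxsplit (V i - m) 0) => ->.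
have E2 : dsum adj L (fun i j => (a i - a j) ^ 2 + (b i - b j) ^ 2) <=
          dsum adj L (fun i j => (V i - V j) ^ 2).
  apply: dsum_le => i j iL jL _; rewrite /a /b (negbTE iL) (negbTE jL).
  case: (maxsplit (V i - m) (V j - m)) => _ H.
  have -> : V i - V j = V i - m - (V j - m) by ring.
  exact: H.
rewrite dsum_split in E2; rewrite E1 dsum_split; lra.
Qed.


Lemma median n (L : {set 'I_n}) (V : 'I_n -> R) :
  ~: L != set0 ->
  exists k, k \notin L /\
    (2 * #|[set j | (j \notin L) && rltb (V k) (V j)]| <= #|~: L|)%N /\
    (2 * #|[set j | (j \notin L) && rltb (V j) (V k)]| <= #|~: L|)%N.
Proof.
move=> Une.
pose le_k k := [set j | (j \notin L) && ~~ rltb (V k) (V j)].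
pose G := [set k | (k \notin L) && (#|~: L| <= 2 * #|le_k k|)%N].
have Gne : G != set0.
  have [kM [kU HkM]] := @argmax _ _ V Une.
  apply/set0Pn; exists kM; rewrite inE; rewrite inE in kU; rewrite kU /=.
  have -> : le_k kM = ~: L.
    apply/setP => j; rewrite !inE; case jL: (j \in L) => //=.
    apply/rltbP => H; have := HkM j; rewrite inE jL => /(_ isT); lra.
  lia.
have [k0 [k0G Hk0]] := @argmin _ G V Gne.
move: (k0G); rewrite inE => /andP [k0L k0good].
exists k0; split => //; split.
  have := cardsID [set j | rltb (V k0) (V j)] (~: L).
  have -> : ~: L :&: [set j | rltb (V k0) (V j)] = [set j | (j \notin L) && rltb (V k0) (V j)].
    by apply/setP => j; rewrite !inE.
  have -> : ~: L :\: [set j | rltb (V k0) (V j)] = le_k k0.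
    by apply/setP => j; rewrite !inE andbC.
  move=> E; move: k0good; rewrite -E; set a := #|_|; set b := #|le_k k0|; lia.
set Lt := [set j | (j \notin L) && rltb (V j) (V k0)].
case: (leqP (2 * #|Lt|) #|~: L|) => // Hlt.
have Ltne : Lt != set0 by apply/eqP => E; rewrite E cards0 in Hlt.
have [k1 [k1Lt Hk1]] := @argmax _ _ V Ltne.
move: (k1Lt); rewrite inE => /andP [k1L /rltbP k1lt].
have sub : Lt \subset le_k k1.
  apply/subsetP => j jLt; move: (jLt); rewrite !inE => /andP [-> _] /=.
  by apply/rltbP; have := Hk1 j jLt; lra.
have k1G : k1 \in G.
  rewrite inE k1L /=; have := subset_leq_card sub; move: Hlt; set a := #|Lt|; set b := #|le_k k1|; set c := #|~: L|; lia.
have := Hk0 k1 k1G; lra.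
Qed.


Lemma rsum_abs (I : finType) (P : pred I) (F : I -> R) :
  Rabs (\rsum_(i | P i) F i) <= \rsum_(i | P i) Rabs (F i).
Proof.
apply: (big_ind2 (fun a b => Rabs a <= b)).
- by rewrite Rabs_R0; lra.
- move=> a1 a2 b1 b2 H1 H2; have := Rabs_triang a1 b1; lra.
- by move=> i _; lra.
Qed.

Lemma amgm2 (w a D : R) : 0 < D -> w * a <= 144 * w ^ 2 / D + D * a ^ 2 / 576.
Proof.
move=> HD.
have h := pow2_ge_0 (12 * w - D * a / 24).
have e : 144 * w ^ 2 / D + D * a ^ 2 / 576 - w * a = (12 * w - D * a / 24) ^ 2 / D
  by field; lra.
have : 0 <= (12 * w - D * a / 24) ^ 2 / D by apply: Rle_mult_inv_pos.
lra.
Qed.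

Lemma amgm3 (a l : R) : 0 < l -> Rabs a <= 1 / (2 * l) + l * a ^ 2 / 2.
Proof.
move=> Hl.
have h := pow2_ge_0 (l * Rabs a - 1).
have e : 1 / (2 * l) + l * a ^ 2 / 2 - Rabs a = (l * Rabs a - 1) ^ 2 / (2 * l).
  have : Rabs a ^ 2 = a ^ 2 by rewrite -Rsqr_pow2 -Rsqr_abs Rsqr_pow2.
  move=> ea; field_simplify; [|lra|lra]. rewrite ea; field; lra.
have : 0 <= (l * Rabs a - 1) ^ 2 / (2 * l) by apply: Rle_mult_inv_pos; lra.
lra.
Qed.

Lemma final_vertex (a dg l X XB dC : R) : 0 < l -> 0 < dC -> dC * l < dg -> 0 <= a ->
  dg * a <= 2 + dg / (2 * l) + X / dC -> 0 <= X -> X <= XB ->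
  a * l <= 2 / dC + 1 / 2 + XB / dC ^ 2.
Proof.
move=> Hl HdC Hdg Ha H HX HXB.
have hdg : 0 < dg by nra.
set q := l / dg.
have q0 : 0 < q by apply: Rdiv_lt_0_compat.
have qe : q <= / dC.
  rewrite /q; apply: (Rmult_le_reg_l (dC * dg)); first nra.
  have -> : dC * dg * (l / dg) = dC * l by field; lra.
  have -> : dC * dg * / dC = dg by field; lra.
  lra.
have E1 : a * l = (dg * a) * q by rewrite /q; field; lra.
have E2 : (2 + dg / (2 * l) + X / dC) * q = 2 * q + 1 / 2 + X * / dC * q by rewrite /q; field; lra.
have h1 : (dg * a) * q <= (2 + dg / (2 * l) + X / dC) * q by apply: Rmult_le_compat_r; lra.
have e0 : 0 < / dC by apply: Rinv_0_lt_compat.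
have h2 : X * / dC * q <= XB * / dC * / dC.
  have := Rmult_le_pos X (/ dC) HX (Rlt_le _ _ e0).
  have : X * / dC <= XB * / dC by apply: Rmult_le_compat_r; lra.
  move=> h3 h4; apply: Rmult_le_compat; lra.
have -> : 2 / dC + 1 / 2 + XB / dC ^ 2 = 2 * / dC + 1/2 + XB * / dC * / dC by field; lra.
lra.
Qed.

Lemma final_alg (v m dx s a eps : R) : 0 < s -> 0 <= a <= 1 -> 0 <= m <= 1 -> 0 <= eps ->
  Rabs (v - m) <= eps -> Rabs (dx - m * s) <= s * eps ->
  Rabs (v - (dx + a) / (s + 2 * a)) <= 2 * eps + 1 / s.
Proof.
move=> Hs [Ha0 Ha1] [Hm0 Hm1] He H1 H2.
have Hs2 : 0 < s + 2 * a by lra.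
set t := (dx + a) / (s + 2 * a).
have E : (s + 2 * a) * (m - t) = (m * s - dx) + a * (2 * m - 1) by rewrite /t; field; lra.
have H3 : Rabs ((s + 2 * a) * (m - t)) <= s * eps + a.
  rewrite E; apply: Rle_trans (Rabs_triang _ _) _.
  have : Rabs (m * s - dx) <= s * eps by rewrite Rabs_minus_sym.
  have h1 : Rabs (2 * m - 1) <= 1 by split_Rabs; lra.
  have : Rabs (a * (2 * m - 1)) <= a.
    rewrite Rabs_mult (Rabs_pos_eq a Ha0).
    have := Rabs_pos (2 * m - 1) => ?; nra.
  lra.
rewrite Rabs_mult (Rabs_pos_eq _ (Rlt_le _ _ Hs2)) in H3.
have H4 : Rabs (m - t) <= eps + 1 / s.
  apply: (Rmult_le_reg_l (s + 2 * a)) => //.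
  have : (s + 2 * a) * (eps + 1 / s) = s * eps + 2 * a * eps + 1 + 2 * a / s by field; lra.
  have : 0 <= 2 * a / s by apply: Rle_mult_inv_pos; lra.
  nra.
have := Rabs_triang (v - m) (m - t).
have -> : v - m + (m - t) = v - t by ring.
lra.
Qed.

Lemma sum_xy n (x y : 'I_n) (F : 'I_n -> R) : x != y ->
  (forall i, i != x -> i != y -> F i = 0) -> \rsum_(i | true) F i = F x + F y.
Proof.
move=> nxy H; have nyx : y != x by rewrite eq_sym.
rewrite (bigD1 x) //= (bigD1 y) //= big1 ?Rplus_0_r //.
by move=> i /andP [ix iy]; apply: H.
Qed.

Lemma div_bound (a K l : R) : 0 < l -> a * l <= K -> a <= K / l.
Proof.
move=> Hl H; apply: (Rmult_le_reg_r l) => //.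
have -> : K / l * l = K by field; lra.
exact: H.
Qed.

Lemma rsum_sub_le (I : finType) (P Q : pred I) (F : I -> R) :
  (forall i, 0 <= F i) -> \rsum_(i | P i && Q i) F i <= \rsum_(i | P i) F i.
Proof.
move=> H; rewrite big_mkcondr; apply: rsum_le => i _.
by case: (Q i); [lra | apply: H].
Qed.

Lemma core n (adj : rel 'I_n) (x y : 'I_n) (V : 'I_n -> R) (C delta l : R) :
  0 < C -> 0 < delta -> 0 < l -> 4 <= delta * C * l ->
  (forall i j, adj i j = adj j i) -> (forall i, adj i i = false) ->
  P1 adj -> P4 adj 1 1 2 ->
  (forall i, delta * C * l < INR (deg adj i) < 4 * C * l) ->
  x != y -> unit_potential adj x y V ->
  forall i, i != x -> i != y ->
  Rabs (V i - INR (deg adj x) / (INR (deg adj x) + INR (deg adj y))) <=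
   (2 * (2 / (delta * C) + 1/2 + 2654208 / delta / (delta * C) ^ 2) + 2 / (delta * C)) / l.
Proof.
move=> HC Hd Hl Hl4 sym irr Hc Hp4 Hdeg nxy [Vx Vy Vh] i0 i0x i0y.
pose L := [set x; y].
have inL : forall j, (j \notin L) = (j != x) && (j != y).
  by move=> j; rewrite !inE negb_or.
have harm : forall j, j \notin L -> \rsum_(k | adj j k) (V j - V k) = 0.
  move=> j; rewrite inL => /andP [jx jy]; rewrite -(Vh j jx jy).
  by apply: eq_bigr => k _; ring.
have Vb : forall j, 0 <= V j <= 1.
  move=> j; split.
    have := @maxp n adj x y (fun j => - V j) Hc.
    move=> /(_ _ j); rewrite Vx Vy.
    have -> : Rmax (-1) (-0) = 0 by rewrite /Rmax; case: Rle_dec; lra.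
    move=> H; have : - V j <= 0; last lra.
    apply: H => k kx ky.
    transitivity (- \rsum_(k' | adj k k') (1 * (V k - V k'))); last by rewrite (Vh k kx ky) Ropp_0.
    by rewrite -rsum_opp; apply: eq_bigr => k' _; ring.
  have := @maxp n adj x y V Hc.
  move=> /(_ _ j); rewrite Vx Vy.
  have -> : Rmax 1 0 = 1 by rewrite /Rmax; case: Rle_dec; lra.
  apply=> k kx ky; rewrite -(Vh k kx ky).
  by apply: eq_bigr => k' _; ring.
pose dg j := \rsum_(k | adj j k) 1.
pose dpr j := \rsum_(k | (k \notin L) && adj j k) 1.
have dgE : forall j, dg j = INR (deg adj j) by move=> j; rewrite /dg rsum_card.
have dsplit : forall j, dg j = dpr j + ((if adj j x then 1 else 0) + (if adj j y then 1 else 0)).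
  by move=> j; rewrite /dg /dpr (split_adj adj (fun _ => 1) j nxy).
have dprle : forall j, dpr j <= dg j /\ dg j - 2 <= dpr j.
  move=> j; rewrite (dsplit j); case: (adj j x); case: (adj j y); lra.
have dgb : forall j, delta * C * l < dg j < 4 * C * l by move=> j; rewrite dgE.
have Une : ~: L != set0 by apply/set0Pn; exists i0; rewrite inE inL i0x i0y.
have [k [kL [c1 c2]]] := median V Une.
have cn : (#|~: L| <= n)%N by have := max_card (~: L); rewrite card_ord.
have hp4 : HP4 adj L.
  move=> S Sne dSL S2.
  have cL : (#|L| <= 2)%N by rewrite cards2 ltnS leq_b1.
  have := Hp4 (fun _ _ => 1) (fun _ _ => erefl) (fun _ _ _ => conj (Rle_refl 1) (Rle_refl 1)) L S cL Sne dSL S2.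
  by rewrite Rmult_1_r.
have PX := poincare hp4 sym (leq_trans c1 cn) (leq_trans c2 cn).
pose g j := V j - V k.
pose w j := (if adj j x then 1 else 0) + (if adj j y then 1 else 0).
pose X := dsum adj L (fun i j => (V i - V k) ^ 2).
pose Q := dsum adj L (fun i j => (V i - V j) ^ 2).
have X0 : 0 <= X by apply: dsum_ge0 => *; apply: pow2_ge_0.
have en : dsum adj L (fun i j => g i * (V i - V j)) +
   \rsum_(i | i \notin L) ((if adj i x then g i * (V i - V x) else 0) +
                           (if adj i y then g i * (V i - V y) else 0)) = 0.
  rewrite /dsum -rsum_split big1 // => i iL.
  rewrite -(split_adj adj (fun j => g i * (V i - V j)) i nxy) rsum_scal (harm i iL).
  ring.
have half : dsum adj L (fun i j => g i * (V i - V j)) = Q / 2.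
  have S := dsum_swap L (fun i j => g i * (V i - V j)) sym.
  have : dsum adj L (fun i j => g i * (V i - V j)) + dsum adj L (fun i j => g j * (V j - V i)) = Q.
    rewrite -dsum_split; apply: dsum_ext => i j _ _ _; rewrite /g; ring.
  rewrite -S; lra.
have bnd : forall i, i \notin L -> - (w i * Rabs (g i)) <=
     (if adj i x then g i * (V i - V x) else 0) + (if adj i y then g i * (V i - V y) else 0).
  move=> i _; rewrite /w Vx Vy /g; have [m0 m1] := Vb k; have [v0 v1] := Vb i.
  case: (adj i x); case: (adj i y); split_Rabs; nra.
have Qw : Q / 2 <= \rsum_(i | i \notin L) (w i * Rabs (g i)).
  have := rsum_le bnd; rewrite rsum_opp; lra.
pose D := delta * C * l / 2.
have D0 : 0 < D by rewrite /D; lra.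
have Ddpr : forall j, j \notin L -> D <= dpr j.
  move=> j _; have := dprle j; have := dgb j; rewrite /D; lra.
have XE : X = \rsum_(i | i \notin L) (dpr i * g i ^ 2).
  rewrite /X /dsum; apply: eq_bigr => i _; rewrite rsum_constc /dpr /g; exact: Rmult_comm.
have wE : forall z, \rsum_(i | i \notin L) (if adj i z then 1 else 0) = dpr z.
  move=> z; rewrite -big_mkcondr /dpr; apply: eq_bigl => j; by rewrite sym.
have sw : \rsum_(i | i \notin L) w i = dpr x + dpr y.
  by rewrite /w rsum_split !wE.
have am : \rsum_(i | i \notin L) (w i * Rabs (g i)) <=
          \rsum_(i | i \notin L) (288 / D * w i + / 576 * (dpr i * g i ^ 2)).
  apply: rsum_le => i iL.
  have := amgm2 (w i) (Rabs (g i)) D0.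
  have ga : Rabs (g i) ^ 2 = g i ^ 2 by rewrite -Rsqr_pow2 -Rsqr_abs Rsqr_pow2.
  rewrite ga.
  have hw : w i ^ 2 <= 2 * w i by rewrite /w; case: (adj i x); case: (adj i y); lra.
  have hg := pow2_ge_0 (g i).
  have := Ddpr i iL.
  move=> h1 h2.
  have e1 : 144 * w i ^ 2 / D <= 288 / D * w i.
    have : 144 * w i ^ 2 / D = 144 / D * w i ^ 2 by field; lra.
    move=> ->; have : 0 < 144 / D by apply: Rdiv_lt_0_compat; lra.
    have : 288 / D * w i = 144 / D * (2 * w i) by field; lra.
    move=> -> ?; apply: Rmult_le_compat_l; lra.
  have e2 : D * g i ^ 2 / 576 <= / 576 * (dpr i * g i ^ 2).
    have : D * g i ^ 2 <= dpr i * g i ^ 2 by apply: Rmult_le_compat_r.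
    lra.
  lra.
rewrite rsum_split !rsum_scal -XE sw in am.
have PX' : X <= 144 * Q by exact: PX.
have s8 : dpr x + dpr y < 8 * C * l.
  have := dprle x; have := dprle y; have := dgb x; have := dgb y; lra.
have s8' : 288 / D * (dpr x + dpr y) <= 4608 / delta.
  have -> : 4608 / delta = 288 / D * (8 * C * l) by rewrite /D; field; lra.
  apply: Rmult_le_compat_l; last lra.
  apply: Rlt_le; apply: Rdiv_lt_0_compat; lra.
have Qb : Q <= 18432 / delta.
  have -> : 18432 / delta = 4 * (4608 / delta) by field; lra.
  lra.
have XB : X <= 2654208 / delta.
  have -> : 2654208 / delta = 144 * (18432 / delta) by field; lra.
  lra.
pose Y := \rsum_(j | j \notin L) g j ^ 2.
have DY : D * Y <= X.
  rewrite XE /Y -rsum_scal; apply: rsum_le => j jL.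
  apply: Rmult_le_compat_r; [apply: pow2_ge_0 | exact: Ddpr].
have vert : forall i, i \notin L -> Rabs (g i) * l <=
    2 / (delta * C) + 1 / 2 + 2654208 / delta / (delta * C) ^ 2.
  move=> i iL.
  have h := harm i iL; rewrite rsum_sub rsum_constc in h.
  have hv : dg i * g i = \rsum_(j | adj i j) g j.
    rewrite /g rsum_sub (rsum_constc _ (V k)).
    rewrite /dg; lra.
  have hs := split_adj adj g i nxy; rewrite -/L in hs.
  have ab : Rabs ((if adj i x then g x else 0) + (if adj i y then g y else 0)) <= 2.
    rewrite /g Vx Vy; have [m0 m1] := Vb k.
    case: (adj i x); case: (adj i y); split_Rabs; lra.
  have hsum : Rabs (\rsum_(j | (j \notin L) && adj i j) g j) <=
      / (2 * l) * dpr i + l / 2 * \rsum_(j | (j \notin L) && adj i j) g j ^ 2.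
    apply: Rle_trans (rsum_abs _ _) _.
    have := rsum_le (fun j (_ : (j \notin L) && adj i j) => amgm3 (g j) Hl).
    rewrite rsum_split (rsum_constc _ (1 / (2 * l))).
    have -> : \rsum_(j | (j \notin L) && adj i j) (l * g j ^ 2 / 2) =
              l / 2 * \rsum_(j | (j \notin L) && adj i j) g j ^ 2.
      by rewrite -rsum_scal; apply: eq_bigr => j _; field.
    rewrite /dpr; move=> H; apply: Rle_trans H _; right; field; lra.
  have sY : \rsum_(j | (j \notin L) && adj i j) g j ^ 2 <= Y.
    by apply: rsum_sub_le => j; apply: pow2_ge_0.
  have lY : l / 2 * Y <= X / (delta * C).
    have -> : l / 2 * Y = D * Y / (delta * C) by rewrite /D; field; lra.
    apply: Rmult_le_compat_r; last exact: DY.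
    apply: Rlt_le; apply: Rinv_0_lt_compat; nra.
  have A1 : dg i * Rabs (g i) <= 2 + dg i / (2 * l) + X / (delta * C).
    have -> : dg i * Rabs (g i) = Rabs (dg i * g i).
      rewrite Rabs_mult (Rabs_pos_eq (dg i)) //; case: (dgb i) => ? ?; lra.
    rewrite hv hs; apply: Rle_trans (Rabs_triang _ _) _.
    have [dp1 _] := dprle i.
    have : / (2 * l) * dpr i <= dg i / (2 * l).
      rewrite /Rdiv Rmult_comm; apply: Rmult_le_compat_r; last lra.
      apply: Rlt_le; apply: Rinv_0_lt_compat; lra.
    have : (l / 2) * (\rsum_(j | (j \notin L) && adj i j) g j ^ 2) <= (l / 2) * Y.
      apply: Rmult_le_compat_l; lra.
    lra.
  have := dgb i; case => dg1 _.
  apply: (final_vertex Hl _ dg1 (Rabs_pos _) A1 X0 XB); nra.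
have cons : \rsum_(j | (j \notin L) && adj x j) (1 - V j) =
            \rsum_(j | (j \notin L) && adj y j) V j.
  have S := @full_swap _ adj (fun i j => V i - V j) sym.
  move: S; set A := (X in X = _); set B := (X in _ = X) => S.
  have SB : B = - A.
    rewrite /A /B -rsum_opp; apply: eq_bigr => i _; rewrite -rsum_opp.
    by apply: eq_bigr => j _; ring.
  have tot : A = 0 by lra.
  rewrite /A in tot.
  have nyx : y != x by rewrite eq_sym.
  rewrite (@sum_xy _ x y (fun i => \rsum_(j | adj i j) (V i - V j)) nxy) in tot; last first.
    move=> j jx jy; apply: harm; by rewrite inL jx jy.
  rewrite (split_adj adj (fun j => V x - V j) x nxy) (split_adj adj (fun j => V y - V j) y nxy) in tot.
  rewrite -/L (irr x) (irr y) (sym y x) Vx Vy in tot.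
  have e2 : \rsum_(j | (j \notin L) && adj y j) (0 - V j) = - \rsum_(j | (j \notin L) && adj y j) V j.
    by rewrite -rsum_opp; apply: eq_bigr => j _; ring.
  rewrite e2 in tot.
  by move: tot; case: (adj x y) => tot; lra.
pose Kg := 2 / (delta * C) + 1 / 2 + 2654208 / delta / (delta * C) ^ 2.
pose eps := Kg / l.
have geps : forall j, j \notin L -> Rabs (g j) <= eps.
  by move=> j jL; apply: div_bound => //; apply: vert.
have sb : forall z, Rabs (\rsum_(j | (j \notin L) && adj z j) g j) <= eps * dpr z.
  move=> z; apply: Rle_trans (rsum_abs _ _) _.
  rewrite /dpr -rsum_constc; apply: rsum_le => j /andP [jL _]; exact: geps.
have ex : \rsum_(j | (j \notin L) && adj x j) (1 - V j) =
          (1 - V k) * dpr x - \rsum_(j | (j \notin L) && adj x j) g j.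
  rewrite /dpr -rsum_constc -rsum_sub; apply: eq_bigr => j _; rewrite /g; ring.
have ey : \rsum_(j | (j \notin L) && adj y j) V j =
          V k * dpr y + \rsum_(j | (j \notin L) && adj y j) g j.
  rewrite /dpr -rsum_constc -rsum_split; apply: eq_bigr => j _; rewrite /g; ring.
pose s := dpr x + dpr y.
have Ds : D <= s.
  have := dprle x; have := dprle y; have := dgb x; have := dgb y.
  rewrite /s /D; lra.
have key : Rabs (dpr x - V k * s) <= s * eps.
  have -> : dpr x - V k * s = \rsum_(j | (j \notin L) && adj x j) g j + \rsum_(j | (j \notin L) && adj y j) g j.
    move: cons; rewrite ex ey /s => cons; lra.
  apply: Rle_trans (Rabs_triang _ _) _.
  have := sb x; have := sb y; rewrite /s; lra.
pose a := if adj x y then 1 else 0.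
have dgx : INR (deg adj x) = dpr x + a.
  by rewrite -dgE dsplit (irr x) /a Rplus_0_l.
have dgy : INR (deg adj y) = dpr y + a by rewrite -dgE dsplit (irr y) (sym y x) /a; case: (adj x y); ring.
have s0 : 0 < s by lra.
have eps0 : 0 <= eps.
  have := geps i0; rewrite inL i0x i0y => /(_ isT) h; have := Rabs_pos (g i0); lra.
have gi0 : Rabs (V i0 - V k) <= eps by apply: geps; rewrite inL i0x i0y.
have fa := @final_alg (V i0) (V k) (dpr x) s a eps s0 ltac:(rewrite /a; case: (adj x y); lra)
  (Vb k) eps0 gi0 key.
have -> : INR (deg adj x) / (INR (deg adj x) + INR (deg adj y)) = (dpr x + a) / (s + 2 * a).
  by rewrite dgx dgy /s; congr (_ / _); ring.
apply: Rle_trans fa _.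
have : 1 / s <= 2 / (delta * C) / l.
  have -> : 2 / (delta * C) / l = 1 / D by rewrite /D; field; lra.
  apply: Rmult_le_compat_l; first lra.
  apply: Rinv_le_contravar => //.
have -> : (2 * Kg + 2 / (delta * C)) / l = 2 * eps + 2 / (delta * C) / l by rewrite /eps; field; lra.
lra.
Qed.


Theorem corollary3p2 (C delta : R) (HC : (0 < C)) (Hd : (0 < delta)) :
  exists (M : R) (N0 : nat),
    forall (n : nat) (adj : rel 'I_n),
      (N0 <= n)%N ->
      simple_graph adj ->
      proper_graph adj 1 1 2 C delta ->
      forall (x y : 'I_n) (V : 'I_n -> R),
        x != y ->
        unit_potential adj x y V ->
        forall i : 'I_n, i != x -> i != y ->
          (Rabs (V i - INR (deg adj x) / (INR (deg adj x) + INR (deg adj y)))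
             <= M / ln (INR n)).
Proof.
pose l0 := 4 / (delta * C) + 1.
have [N0 HN0] := INR_unbounded (exp l0).
exists (2 * (2 / (delta * C) + 1 / 2 + 2654208 / delta / (delta * C) ^ 2) + 2 / (delta * C)), N0.
move=> n adj HN [sym irr] [HP1 HP2 HP3 HP4 HP5] x y V nxy Hu i ix iy.
have HdC : 0 < delta * C by apply: Rmult_lt_0_compat.
have Hn : exp l0 < INR n.
  have : INR N0 <= INR n by apply: le_INR; apply/leP.
  lra.
have Hn0 : 0 < INR n by have := exp_pos l0; lra.
have Hl : l0 < ln (INR n).
  by rewrite -{1}(ln_exp l0); apply: ln_increasing => //; apply: exp_pos.
have Hl0 : 0 < l0.
  rewrite /l0; have : 0 < 4 / (delta * C) by apply: Rdiv_lt_0_compat; lra.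
  lra.
have H4 : 4 <= delta * C * ln (INR n).
  have : delta * C * l0 <= delta * C * ln (INR n) by apply: Rmult_le_compat_l; lra.
  have : delta * C * l0 = 4 + delta * C by rewrite /l0; field; lra.
  lra.
apply: (core HC Hd _ H4 sym irr HP1 HP4 HP5 nxy Hu ix iy); lra.
Qed.
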